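(* Let $m, n \in \mathbb N$, let $\mathcal M \subset M_m$ be a real vector subspace, and let $\phi \colon \mathcal M \to M_n$ be a real linear map such that $\phi(\mathcal M \cap \mathcal U_m) \subset \mathcal U_n$. Then for all $U, V \in \mathcal M \cap \mathcal U_m$: if $\operatorname{Re}(U^\ast V) = 0_m$, then $\operatorname{Re}(\phi(U)^\ast\phi(V)) = 0_n$.
   Context: $M_m$ is the set of $m\times m$ complex matrices, $\mathcal U_m$ the unitary ones, and $\operatorname{Re}A = \tfrac12(A+A^\ast)$. *)

(* Defs.v *)
From HB Require Import structures.
From mathcomp Require Import all_boot all_order all_algebra.
From mathcomp Require Import complex.
From mathcomp Require Import reals.
Set Implicit Arguments. Unset Strict Implicit. Unset Printing Implicit Defensive.
Import Order.TTheory GRing.Theory Num.Theory.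
Local Open Scope ring_scope.

Definition adjmx (R : realType) (m n : nat) (A : 'M[(complex R)]_(m, n)) : 'M[(complex R)]_(n, m) :=
  (map_mx (@conjc R) A)^T.

Definition Remx (R : realType) (m : nat) (A : 'M[(complex R)]_m) : 'M[(complex R)]_m :=
  (2%:R)^-1 *: (A + adjmx A).

Definition unitary_mx (R : realType) (m : nat) (U : 'M[(complex R)]_m) : Prop :=
  adjmx U *m U = 1%:M /\ U *m adjmx U = 1%:M.

Definition real_subspace (R : realType) (m : nat) (M : 'M[(complex R)]_m -> Prop) : Prop :=
  [/\ M 0,
      (forall A B, M A -> M B -> M (A + B)) &
      (forall (r : R) A, M A -> M ((r%:C)%C *: A))].

(* real linear map M -> M_n (only its values on M matter) *)
Definition real_linear_on (R : realType) (m n : nat) (M : 'M[(complex R)]_m -> Prop)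
  (phi : 'M[(complex R)]_m -> 'M[(complex R)]_n) : Prop :=
  (forall A B, M A -> M B -> phi (A + B) = phi A + phi B) /\
  (forall (r : R) A, M A -> phi ((r%:C)%C *: A) = (r%:C)%C *: phi A).

(* Main.v *)
Require Import Defs.
From HB Require Import structures.
From mathcomp Require Import all_boot all_order all_algebra.
From mathcomp Require Import complex.
From mathcomp Require Import reals.
Import Order.TTheory GRing.Theory Num.Theory.
Local Open Scope ring_scope.

Section H.
Variable R : realType.
Local Notation C := (complex R).

Lemma adjD k l (A B : 'M[C]_(k,l)) : adjmx (A + B) = adjmx A + adjmx B.
Proof. by rewrite /adjmx map_mxD linearD. Qed.

Lemma adjZr k l (r : R) (A : 'M[C]_(k,l)) : adjmx ((r%:C)%C *: A) = (r%:C)%C *: adjmx A.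
Proof. apply/matrixP=> i j; rewrite /adjmx !mxE rmorphM; congr (_ * _); exact: conjc_real. Qed.

Lemma adjM k l p (A : 'M[C]_(k,l)) (B : 'M[C]_(l,p)) : adjmx (A *m B) = adjmx B *m adjmx A.
Proof. by rewrite /adjmx map_mxM trmx_mul. Qed.

Lemma adjK k l (A : 'M[C]_(k,l)) : adjmx (adjmx A) = A.
Proof.
apply/matrixP=> i j; rewrite /adjmx !mxE; exact: conjcK.
Qed.

Lemma key k l (r : R) (X Y : 'M[C]_(k,l)) :
  adjmx ((r%:C)%C *: (X + Y)) *m ((r%:C)%C *: (X + Y)) =
  ((r%:C)%C * (r%:C)%C) *: (adjmx X *m X + adjmx Y *m Y + (adjmx X *m Y + adjmx (adjmx X *m Y))).
Proof.
rewrite adjZr adjD adjM adjK -scalemxAr -scalemxAl scalerA.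
congr (_ *: _).
rewrite mulmxDl !mulmxDr.
move: (adjmx X *m X) (adjmx X *m Y) (adjmx Y *m X) (adjmx Y *m Y) => a b c d.
by rewrite -!addrA; congr (_ + _); rewrite [RHS]addrC addrA.
Qed.

Lemma half2 k : (2%:R^-1 : C) *: (1%:M + 1%:M : 'M[C]_k) = 1%:M.
Proof.
rewrite -[in X in _ *: X](scale1r (1%:M : 'M[C]_k)) -scalerDl scalerA mulVf ?scale1r //.
by rewrite pnatr_eq0.
Qed.

End H.

Theorem corollary3p2 (R : realType) (m n : nat)
  (M : 'M[(complex R)]_m -> Prop) (phi : 'M[(complex R)]_m -> 'M[(complex R)]_n) :
  real_subspace M ->
  real_linear_on M phi ->
  (forall U, M U -> unitary_mx U -> unitary_mx (phi U)) ->
  forall U V, M U -> unitary_mx U -> M V -> unitary_mx V ->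
    Remx (adjmx U *m V) = 0 ->
    Remx (adjmx (phi U) *m phi V) = 0.
Proof.
move=> [M0 MD MZ] [phiD phiZ] hu U V MU [UU _] MV [VV _] hre.
set s := (Num.sqrt (2%:R : R))^-1.
have hc : ((s%:C)%C * (s%:C)%C : complex R) = 2%:R^-1.
  rewrite -rmorphM /s -invfM -expr2 sqr_sqrtr ?ler0n //.
  by rewrite rmorphV ?unitfE ?pnatr_eq0 // rmorph_nat.
have h2 : (2%:R^-1 : complex R) != 0 by rewrite invr_eq0 pnatr_eq0.
have hre' : adjmx U *m V + adjmx (adjmx U *m V) = 0.
  by move: hre; rewrite /Remx => /eqP; rewrite scaler_eq0 (negbTE h2) orFb => /eqP.
set W := (s%:C)%C *: (U + V).
have MW : M W by apply: MZ; apply: MD.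
have WW : adjmx W *m W = 1%:M.
  by rewrite /W key UU VV hre' addr0 hc; apply: half2.
have [PW _] : unitary_mx (phi W).
  by apply: hu => //; split => //; apply: mulmx1C.
move: PW; rewrite /W phiZ ?phiD //; last by apply: MD.
have [PU _] := hu U MU (conj UU (mulmx1C UU)).
have [PV _] := hu V MV (conj VV (mulmx1C VV)).
rewrite key hc PU PV scalerDr.
have -> : (2%:R^-1 : complex R) *: (1%:M + 1%:M : 'M[complex R]_n) = 1%:M by apply: half2.
move=> /eqP; rewrite -subr_eq0 addrC addKr.
rewrite scaler_eq0 (negbTE h2) orFb => /eqP hP.
by rewrite /Remx hP scaler0.
Qed.
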